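(* In the congestion game, let $R=\sup_{\lambda\ll\lambda_0}\mathrm{PoA}(\lambda)$, and assume that for each $w\in\mathcal{W}$ and every $x\in\mathcal{C}(w)$ there exists $e\in x$ with $c_e(t)>0$ for all $t>0$. Let $W_1,W_2,\dots$ be i.i.d. with law $\lambda_0\in\mathcal{P}(\mathcal{W})$. Then for every $\epsilon>0$ and $c>0$ there exists $N$ such that for all $n\ge N$, $$\mathbb{P}(\mathrm{PoA}_n(W_1,\dots,W_n)\ge R+\epsilon)\le e^{-cn}.$$
   Context: Congestion game: $\mathcal{W}$ finite set of types; $E$ finite set; $\mathcal{X}=2^E\setminus\{\emptyset\}$ (both finite, discrete); $\mathcal{C}$ assigns to each $w$ a nonempty set $\mathcal{C}(w)\subset\mathcal{X}$; each $c_e:[0,\infty)\to[0,\infty)$ is continuous and increasing; $\ell_e(m)=m\{(w,x):e\in x\}$ and $F(m,w,x)=\sum_{e\in x}c_e(\ell_e(m))$ for $m\in\mathcal{P}(\mathcal{W}\times\mathcal{X})$. A Nash equilibrium with type vector $\vec w=(w_1,\dots,w_n)$ is $(x_1,\dots,x_n)$ with $x_i\in\mathcal{C}(w_i)$ and $F(\frac1n\sum_k\delta_{(w_k,x_k)},w_i,x_i)=\min_{y\in\mathcal{C}(w_i)}F(\frac1n\sum_{k\ne i}\delta_{(w_k,x_k)}+\frac1n\delta_{(w_i,y)},w_i,y)$ for all $i$; these exist for all $n$ and $\vec w$. $\widehat{\mathcal{N}}_n(\vec w)$ = set of $\frac1n\sum_i\delta_{(w_i,x_i)}$ over such equilibria;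 $\widehat{\mathcal{A}}_n(\vec w)=\{\frac1n\sum_k\delta_{(w_k,x_k)}:x_i\in\mathcal{C}(w_i)\}$; $V(m)=\int F(m,w,x)\,m(dw,dx)$; $\mathrm{PoA}_n(\vec w)=\sup_{\widehat{\mathcal{N}}_n(\vec w)}V/\inf_{\widehat{\mathcal{A}}_n(\vec w)}V$. For $\lambda\in\mathcal{P}(\mathcal{W})$: $\mathcal{A}(\lambda)=\{m:\text{first marginal }\lambda,\ m\{(w,x):x\in\mathcal{C}(w)\}=1\}$, $\mathcal{M}(\lambda)$ = set of $m\in\mathcal{A}(\lambda)$ with $F(m,w,x)=\min_{y\in\mathcal{C}(w)}F(m,w,y)$ for $m$-a.e. $(w,x)$, and $\mathrm{PoA}(\lambda)=\sup_{\mathcal{M}(\lambda)}V/\inf_{\mathcal{A}(\lambda)}V$. *)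

(* Defs.v *)
From HB Require Import structures.
From mathcomp Require Import all_boot all_order all_algebra.
From mathcomp Require Import all_classical all_reals all_analysis.
Set Implicit Arguments. Unset Strict Implicit. Unset Printing Implicit Defensive.
Import Order.TTheory GRing.Theory Num.Theory numFieldNormedType.Exports.
Local Open Scope ring_scope.
Local Open Scope classical_set_scope.

(* Types W (finite set of types) and E (finite set of resources);
   actions x are subsets of E (elements of X = 2^E \ {emptyset}).
   Measures on the finite space W x X are represented by their
   weight functions  m : W * {set E} -> R. *)

Definition isProb (R : realType) (T : finType) (m : T -> R) : Prop :=
  (forall p, 0 <= m p) /\ \sum_(p : T) m p = 1.

Definition load (R : realType) (W E : finType) (m : W * {set E} -> R) (e : E) : R :=
  \sum_(p : W * {set E} | e \in p.2) m p.

(* F(m,w,x) = sum_{e in x} c_e(l_e(m))  (w is not used, as in the paper) *)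
Definition cost (R : realType) (W E : finType) (c : E -> R -> R)
  (m : W * {set E} -> R) (w : W) (x : {set E}) : R :=
  \sum_(e in x) c e (load m e).

Definition Vsoc (R : realType) (W E : finType) (c : E -> R -> R)
  (m : W * {set E} -> R) : R :=
  \sum_(p : W * {set E}) m p * cost c m p.1 p.2.

Definition emp (R : realType) {W E : finType} {n : nat}
  (ws : 'I_n -> W) (xs : 'I_n -> {set E}) : W * {set E} -> R :=
  fun p => n%:R^-1 * \sum_(i < n) ((ws i, xs i) == p)%:R.

Definition upd (E : finType) (n : nat) (xs : 'I_n -> {set E}) (i : 'I_n)
  (y : {set E}) : 'I_n -> {set E} :=
  fun k => if k == i then y else xs k.

Definition feasible (W E : finType) (C : W -> {set {set E}}) (n : nat)
  (ws : 'I_n -> W) (xs : 'I_n -> {set E}) : Prop :=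
  forall i, xs i \in C (ws i).

(* Nash equilibrium: F at the current action equals the minimum over
   unilateral deviations y in C(w_i) (the value at y = x_i is F itself). *)
Definition nash (R : realType) (W E : finType) (c : E -> R -> R)
  (C : W -> {set {set E}}) (n : nat) (ws : 'I_n -> W) (xs : 'I_n -> {set E}) : Prop :=
  feasible C ws xs /\
  forall i y, y \in C (ws i) ->
    cost c (emp R ws xs) (ws i) (xs i) <= cost c (emp R ws (upd xs i y)) (ws i) y.

Definition PoA_n (R : realType) (W E : finType) (c : E -> R -> R)
  (C : W -> {set {set E}}) (n : nat) (ws : 'I_n -> W) : R :=
  sup [set Vsoc c (emp R ws xs) | xs in [set xs | nash c C ws xs]] /
  inf [set Vsoc c (emp R ws xs) | xs in [set xs | feasible C ws xs]].

Definition admissible (R : realType) (W E : finType) (C : W -> {set {set E}})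
  (lam : W -> R) (m : W * {set E} -> R) : Prop :=
  isProb m /\ (forall w, \sum_(x : {set E}) m (w, x) = lam w) /\
  \sum_(p : W * {set E} | p.2 \in C p.1) m p = 1.

(* M(lambda): equilibria; "m-a.e." = on the support {p | m p > 0} *)
Definition wardrop (R : realType) (W E : finType) (c : E -> R -> R)
  (C : W -> {set {set E}}) (lam : W -> R) (m : W * {set E} -> R) : Prop :=
  admissible C lam m /\
  forall p, 0 < m p -> forall y, y \in C p.1 -> cost c m p.1 p.2 <= cost c m p.1 y.

Definition PoA (R : realType) (W E : finType) (c : E -> R -> R)
  (C : W -> {set {set E}}) (lam : W -> R) : R :=
  sup [set Vsoc c m | m in [set m | wardrop c C lam m]] /
  inf [set Vsoc c m | m in [set m | admissible C lam m]].

Definition abs_cont (R : realType) (W : finType) (lam lam0 : W -> R) : Prop :=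
  forall w, lam0 w = 0 -> lam w = 0.

Definition PoA_star (R : realType) (W E : finType) (c : E -> R -> R)
  (C : W -> {set {set E}}) (lam0 : W -> R) : R :=
  sup [set PoA c C lam | lam in [set lam | isProb lam /\ abs_cont lam lam0]].

(* P(PoA_n(W_1,...,W_n) >= r) for W_1,...,W_n i.i.d. with law lam0:
   the law of (W_1,...,W_n) on the finite set W^n is the product measure. *)
Definition prob_PoA_ge (R : realType) (W E : finType) (c : E -> R -> R)
  (C : W -> {set {set E}}) (lam0 : W -> R) (n : nat) (r : R) : R :=
  \sum_(ws : {ffun 'I_n -> W})
     (\prod_(i < n) lam0 (ws i)) * ((r <= PoA_n c C (fun i => ws i))%R)%:R.

(* Main.v *)
Require Import Defs.
From HB Require Import structures.
From mathcomp Require Import all_boot all_order all_algebra.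
From mathcomp Require Import all_classical all_reals all_analysis.
From mathcomp Require Import ring lra.
Import Order.TTheory GRing.Theory Num.Theory numFieldNormedType.Exports.
Local Open Scope ring_scope.
Local Open Scope classical_set_scope.

Section Aux.
Variable R : realType.

Lemma cont_eps (f : R -> R) x : {within [set t : R | 0 <= t], continuous f} -> 0 <= x ->
  forall eta, 0 < eta -> exists2 d, 0 < d & forall t, 0 <= t -> `|t - x| < d -> `|f t - f x| < eta.
Proof.
move=> /subspace_continuousP H x0 eta eta0.
have := H x x0 => /cvgrPdist_lt /(_ _ eta0).
rewrite near_withinE => /nbhs_ballP[d /= d0 Hd].
exists d => // t t0 tx.
rewrite distrC; apply: Hd => //.
by rewrite /ball /= distrC.
Qed.

Lemma contM_id (f : R -> R) : {within [set t : R | 0 <= t], continuous f} ->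
  {within [set t : R | 0 <= t], continuous (fun t => t * f t)}.
Proof.
move=> H.
move=> x.
apply: (@continuousM R (subspace [set t : R | 0 <= t]) (fun t => t) f x).
  exact: incl_subspace_continuous.
exact: H.
Qed.

Lemma fin_delta (I : finType) (P : I -> R -> Prop) :
  (forall i, exists2 d, 0 < d & forall d', 0 < d' -> d' <= d -> P i d') ->
  exists2 d, 0 < d & forall i, P i d.
Proof.
move=> H.
suff [d d0 Hd] : exists2 d, 0 < d & forall i, i \in enum I -> forall d', 0 < d' -> d' <= d -> P i d'.
  by exists d => // i; apply: Hd => //; rewrite mem_enum.
elim: (enum I) => [|a s [d d0 Hd]]; first by exists 1.
have [da da0 Hda] := H a.
exists (Num.min d da); first by rewrite lt_min d0 da0.
move=> i; rewrite inE => /orP[/eqP->|iS] d' d'0 hd'.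
  by apply: Hda => //; apply: le_trans hd' _; rewrite ge_min lexx orbT.
by apply: Hd => //; apply: le_trans hd' _; rewrite ge_min lexx.
Qed.

Lemma fin_pos_min (I : finType) (f : I -> R) : (forall i, 0 < f i) ->
  exists2 b, 0 < b & forall i, b <= f i.
Proof.
move=> H; apply: (@fin_delta I (fun i d => d <= f i)) => i.
by exists (f i) => // d' _.
Qed.

Lemma le_of_eps (x y K : R) : 0 <= K -> (forall e, 0 < e -> x <= y + K * e) -> x <= y.
Proof.
move=> K0 H; apply/ler_addgt0Pr => e e0.
have K10 : 0 < K + 1 by rewrite ltr_wpDl.
have := H (e / (K + 1)) (divr_gt0 e0 K10).
move/le_trans; apply; rewrite lerD2l.
rewrite mulrA ler_pdivrMr //.
by rewrite mulrC ler_pM2l // lerDl.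
Qed.

Lemma dist_le (x y k : R) : `|x - y| <= k -> x <= y + k /\ y <= x + k.
Proof. by rewrite ler_norml => /andP[h1 h2]; split; lra. Qed.

Lemma eq_approx (x y K : R) : 0 <= K -> (forall d, 0 < d -> `|x - y| <= K * d) -> x = y.
Proof.
move=> K0 H; apply/eqP; rewrite -subr_eq0 -normr_le0.
by apply: (@le_of_eps _ _ K K0) => d d0; rewrite add0r; apply: H.
Qed.

Lemma ge0_approx (x : R) : (forall d, 0 < d -> exists y, 0 <= y /\ `|y - x| < d) -> 0 <= x.
Proof.
move=> H; rewrite leNgt; apply/negP => x0.
have [y [y0 hy]] : exists y, 0 <= y /\ `|y - x| < - x by apply: H; rewrite oppr_gt0.
move: hy; rewrite ltr_norml => /andP[_]; lra.
Qed.

End Aux.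
Section Clu.
Lemma cluster_rV (R : realType) k (u : nat -> 'rV[R]_k) :
  (forall j i, 0 <= u j ord0 i <= 1) ->
  exists z : 'rV[R]_k, forall d, 0 < d -> forall K, exists j, (K <= j)%N /\
     forall i, `|u j ord0 i - z ord0 i| < d.
Proof.
move=> H01.
have cA := @rV_compact R k (fun _ => `[(0:R), 1]%classic) (fun _ => @segment_compact R 0 1).
have := cA (u @ \oo) _ _.
case=> [|z [Az clz]].
- by exists 0%N => // j _ i; rewrite /= in_itv /= H01.
exists z => d d0 K.
have := clz (u @` [set j | (K <= j)%N]) (ball z d) _ _.
case=> [||v [[j Kj <-] bj]].
- by exists K => // j /= Kj; exists j.
- exact: nbhsx_ballx.
exists j; split => // i.
case: bj => _ /(_ ord0 i).
by rewrite /ball /= distrC.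
Qed.

Lemma cluster_fin (R : realType) (I : finType) (u : nat -> I -> R) :
  (forall j i, 0 <= u j i <= 1) ->
  exists z : I -> R, forall d, 0 < d -> forall K, exists j, (K <= j)%N /\
     forall i, `|u j i - z i| < d.
Proof.
move=> H.
have := @cluster_rV R #|{: I}| (fun j => \row_(k < #|{: I}|) u j (enum_val k)).
case=> [j k|z Hz]; first by rewrite mxE; apply: H.
exists (fun i => z ord0 (enum_rank i)) => d d0 K.
have [j [Kj Hj]] := Hz d d0 K; exists j; split => // i.
by have := Hj (enum_rank i); rewrite mxE enum_rankK.
Qed.
End Clu.
Section Emp.
Variables (R : realType) (W E : finType) (c : E -> R -> R).
Local Notation T := (W * {set E})%type.

Lemma sum_ind (q : T) (P : pred T) : \sum_(p | P p) ((q == p)%:R : R) = (P q)%:R.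
Proof.
rewrite big_mkcond (bigD1 q) //= big1 ?addr0; first by rewrite eqxx; case: (P q).
by move=> p /negbTE; rewrite eq_sym => ->; case: (P p).
Qed.

Lemma sum_emp n (ws : 'I_n -> W) (xs : 'I_n -> {set E}) (P : pred T) :
  \sum_(p | P p) emp R ws xs p = n%:R^-1 * \sum_(i < n) (P (ws i, xs i))%:R.
Proof.
rewrite /emp -big_distrr /=; congr (_ * _).
rewrite exchange_big /=; apply: eq_bigr => i _; exact: sum_ind.
Qed.

Lemma emp_ge0 n (ws : 'I_n -> W) (xs : 'I_n -> {set E}) p : 0 <= emp R ws xs p.
Proof. by rewrite /emp mulr_ge0 // sumr_ge0. Qed.

Lemma emp_le1 n (ws : 'I_n -> W) (xs : 'I_n -> {set E}) p : (0 < n)%N -> emp R ws xs p <= 1.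
Proof.
move=> n0; rewrite /emp ler_pdivrMl ?ltr0n // mulr1.
apply: le_trans (_ : \sum_(i < n) (1:R) <= _); last by rewrite sumr_const card_ord.
by apply: ler_sum => i _; case: (_ == _).
Qed.

Lemma sum_emp_all n (ws : 'I_n -> W) (xs : 'I_n -> {set E}) (P : pred T) :
  (0 < n)%N -> (forall i, P (ws i, xs i)) -> \sum_(p | P p) emp R ws xs p = 1.
Proof.
move=> n0 H; rewrite sum_emp (eq_bigr (fun _ => 1)); last by move=> i _; rewrite H.
by rewrite sumr_const card_ord mulVf // pnatr_eq0 -lt0n.
Qed.

Lemma emp_isProb n (ws : 'I_n -> W) (xs : 'I_n -> {set E}) : (0 < n)%N -> isProb (emp R ws xs).
Proof.
move=> n0; split; first exact: emp_ge0.
by rewrite -(@sum_emp_all n ws xs predT).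
Qed.

Lemma load_ge0 (m : T -> R) e : (forall p, 0 <= m p) -> 0 <= load m e.
Proof. by move=> H; rewrite /load sumr_ge0. Qed.

Lemma load_le1 (m : T -> R) e : isProb m -> load m e <= 1.
Proof.
case=> H0 H1; rewrite -H1 /load [X in _ <= X](bigID (fun p : T => e \in p.2)) /=.
by rewrite lerDl sumr_ge0.
Qed.

Lemma V_load (m : T -> R) : Vsoc c m = \sum_e load m e * c e (load m e).
Proof.
rewrite /Vsoc /cost.
under eq_bigr => p _ do rewrite big_distrr /= big_mkcond /=.
rewrite exchange_big /=; apply: eq_bigr => e _.
rewrite /load big_distrl /= [RHS]big_mkcond /=; apply: eq_bigr => p _.
by case: (e \in p.2); rewrite ?mulr0 ?mul0r.
Qed.

End Emp.
Section SupInf.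
Variable R : realType.

Lemma sup_le (S : set R) x : 0 <= x -> (forall y, S y -> y <= x) -> sup S <= x.
Proof.
move=> x0 H; case: (pselect (S !=set0)) => [ne|e]; first exact: ge_sup.
have -> : S = set0 by apply/seteqP; split => y Sy //; apply: e; exists y.
by rewrite sup0.
Qed.

Lemma sup_ge0 (S : set R) : (forall y, S y -> 0 <= y) -> has_ubound S -> 0 <= sup S.
Proof.
move=> H hu; case: (pselect (S !=set0)) => [[y Sy]|e].
  by apply: le_trans (H _ Sy) _; apply: ub_le_sup.
have -> : S = set0 by apply/seteqP; split => y Sy //; apply: e; exists y.
by rewrite sup0.
Qed.

Lemma inf_ge0 (S : set R) : (forall y, S y -> 0 <= y) -> 0 <= inf S.
Proof.
move=> H; case: (pselect (S !=set0)) => [ne|e]; first exact: lb_le_inf.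
have -> : S = set0 by apply/seteqP; split => y Sy //; apply: e; exists y.
by rewrite inf0.
Qed.

End SupInf.
Section Game.
Variables (R : realType) (W E : finType) (C : W -> {set {set E}}) (c : E -> R -> R).
Hypothesis hc_cont : forall e, {within [set t : R | 0 <= t], continuous (c e)}.
Hypothesis hc_nneg : forall e t, 0 <= t -> 0 <= c e t.
Hypothesis hc_incr : forall e s t, 0 <= s -> s <= t -> c e s <= c e t.
Hypothesis hpos : forall w x, x \in C w -> exists e, e \in x /\ forall t, 0 < t -> 0 < c e t.
Local Notation T := (W * {set E})%type.

Lemma sum_fst (f : T -> R) w : \sum_(p : T | p.1 == w) f p = \sum_x f (w, x).
Proof.
rewrite -[RHS](@big_pred1_eq R 0 +%R W w (fun a => \sum_x f (a,x))) pair_big /=.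
by apply: eq_big => [[a b]|[a b]] //=; rewrite andbT.
Qed.

Lemma marg_emp n (ws : 'I_n -> W) (xs : 'I_n -> {set E}) w :
  \sum_x emp R ws xs (w, x) = n%:R^-1 * \sum_(i < n) (ws i == w)%:R.
Proof. by rewrite -sum_fst sum_emp. Qed.

Lemma load_emp n (ws : 'I_n -> W) (xs : 'I_n -> {set E}) e :
  load (emp R ws xs) e = n%:R^-1 * \sum_(i < n) (e \in xs i)%:R.
Proof. by rewrite /load sum_emp. Qed.

Lemma load_upd n (ws : 'I_n -> W) (xs : 'I_n -> {set E}) i y e :
  `|load (emp R ws (upd xs i y)) e - load (emp R ws xs) e| <= n%:R^-1.
Proof.
rewrite !load_emp -mulrBr normrM ger0_norm ?invr_ge0 ?ler0n //.
rewrite (bigD1 i) //= [X in _ - X](bigD1 i) //= /upd eqxx.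
rewrite (eq_bigr (fun k => (e \in xs k)%:R)); last by move=> k /negbTE ->.
rewrite opprD addrACA subrr addr0.
have [->|n0] := eqVneq n 0%N; first by rewrite invr0 mul0r.
rewrite ler_piMr ?invr_ge0 ?ler0n //.
by case: (e \in y); case: (e \in xs i); rewrite /= ?subrr ?normr0 ?ler01 ?subr0 ?sub0r ?normrN ?normr1.
Qed.

Lemma emp_pos n (ws : 'I_n -> W) (xs : 'I_n -> {set E}) p :
  0 < emp R ws xs p -> exists i, (ws i, xs i) = p.
Proof.
move=> H; apply/not_existsP => Hn.
move: H; rewrite /emp big1 ?mulr0 ?ltxx // => i _.
by case: eqP => // /Hn.
Qed.

Definition Ub := \sum_e c e 1.

Lemma V_ub (m : T -> R) : isProb m -> Vsoc c m <= Ub.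
Proof.
move=> Hm; rewrite V_load /Ub; apply: ler_sum => e _.
rewrite -[X in _ <= X]mul1r.
have l0 := @load_ge0 _ _ _ m e (proj1 Hm); have l1 := @load_le1 _ _ _ m e Hm.
by apply: ler_pM => //; [exact: hc_nneg | exact: hc_incr].
Qed.

Lemma Ub_ge0 : 0 <= Ub.
Proof. by apply: sumr_ge0 => e _; apply: hc_nneg. Qed.

Lemma V_ge0 (m : T -> R) : (forall p, 0 <= m p) -> 0 <= Vsoc c m.
Proof.
move=> H; rewrite V_load; apply: sumr_ge0 => e _.
by rewrite mulr_ge0 ?hc_nneg // load_ge0.
Qed.

Lemma V_lb : exists2 b : R, 0 < b & forall m : T -> R, isProb m ->
  \sum_(p | p.2 \in C p.1) m p = 1 -> b <= Vsoc c m.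
Proof.
pose K : R := (#|{: T}|.+1)%:R^-1.
have K0 : 0 < K by rewrite invr_gt0 ltr0n.
pose b e := if `[< forall t, 0 < t -> 0 < c e t >] then K * c e K else 1.
have [beta b0 Hb] : exists2 beta : R, 0 < beta & forall e, beta <= b e.
  apply: fin_pos_min => e; rewrite /b; case: asboolP => // H.
  by rewrite mulr_gt0 // H.
exists beta => // m Hm Hf.
have [p [pC pK]] : exists p : T, p.2 \in C p.1 /\ K <= m p.
  apply: contrapT => Hn'.
  have Hn : forall p : T, ~ (p.2 \in C p.1 /\ K <= m p) by move=> p hp; apply: Hn'; exists p.
  have : \sum_(p | p.2 \in C p.1) m p < \sum_(p : T | p.2 \in C p.1) K.
    apply: ltr_sum.
      apply/hasP; apply: contrapT => Hh.
      move: Hf; rewrite big1 => [/eqP|p pC]; first by rewrite eq_sym oner_eq0.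
      by exfalso; apply: Hh; exists p => //; rewrite mem_index_enum.
    move=> p pC; rewrite ltNge; apply/negP => H; apply: (Hn p); split => //.
  rewrite Hf sumr_const -mulr_natr mulrC /K ltr_pdivlMr ?ltr0n // mul1r ltr_nat ltnNge.
  by rewrite ltnW // ltnS max_card.
have [e [ep epos]] := hpos _ _ pC.
have le : K <= load m e.
  apply: le_trans pK _; rewrite /load (bigD1 p) //= lerDl sumr_ge0 // => q _.
  exact: (proj1 Hm).
apply: (le_trans (Hb e)); rewrite /b asboolT //.
rewrite V_load (bigD1 e) //= -[X in X <= _]addr0; apply: lerD.
  by apply: ler_pM => //; [exact: ltW | apply: hc_nneg; exact: ltW | apply: hc_incr => //; exact: ltW].
apply: sumr_ge0 => e' _; have l0 := @load_ge0 _ _ _ m e' (proj1 Hm).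
by rewrite mulr_ge0 ?hc_nneg.
Qed.

Lemma sum_close (I : finType) (P : pred I) (f g : I -> R) d : 0 < d ->
  (forall i, P i -> `|f i - g i| < d) ->
  `|\sum_(i | P i) f i - \sum_(i | P i) g i| <= #|{: I}|%:R * d.
Proof.
move=> d0 H; rewrite -sumrB; apply: le_trans (ler_norm_sum _ _ _) _.
apply: le_trans (_ : \sum_(i | P i) d <= _).
  by apply: ler_sum => i Pi; apply: ltW; apply: H.
rewrite sumr_const -[d *+ _]mulr_natl; apply: ler_wpM2r; first exact: ltW.
rewrite ler_nat; exact: max_card.
Qed.

Lemma load_close (m m' : T -> R) d : 0 < d -> (forall p, `|m' p - m p| < d) ->
  forall e, `|load m' e - load m e| <= #|{: T}|%:R * d.
Proof. by move=> d0 H e; apply: sum_close. Qed.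

Lemma cont_pack (m : T -> R) : (forall p, 0 <= m p) -> forall eta, 0 < eta ->
  exists2 d, 0 < d & forall m' : T -> R, (forall p, 0 <= m' p) ->
    (forall e, `|load m' e - load m e| < d) ->
    (forall w x, `|cost c m' w x - cost c m w x| <= #|{: E}|%:R * eta) /\
    `|Vsoc c m' - Vsoc c m| <= #|{: E}|%:R * eta.
Proof.
move=> m0 eta eta0.
have [d d0 Hd] : exists2 d, 0 < d & forall e t, 0 <= t -> `|t - load m e| < d ->
     `|c e t - c e (load m e)| < eta /\
     `|t * c e t - load m e * c e (load m e)| < eta.
  apply: (@fin_delta R E (fun e d => forall t, 0 <= t -> `|t - load m e| < d ->
     `|c e t - c e (load m e)| < eta /\
     `|t * c e t - load m e * c e (load m e)| < eta)) => e.
  have l0 := @load_ge0 _ _ _ m e m0.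
  have [d1 d10 H1] := @cont_eps _ _ _ (hc_cont e) l0 _ eta0.
  have [d2 d20 H2] := @cont_eps _ _ _ (@contM_id _ _ (hc_cont e)) l0 _ eta0.
  exists (Num.min d1 d2); first by rewrite lt_min d10 d20.
  move=> d' d'0 d'le t t0 tl; have := lt_le_trans tl d'le; rewrite lt_min => /andP[h1 h2].
  by split; [exact: H1 | exact: H2].
exists d => // m' m'0 Hl; split.
  move=> w x; rewrite /cost.
  apply: le_trans (_ : #|{: E}|%:R * eta <= _) => //.
  apply: sum_close => // e _.
  exact: (proj1 (Hd e _ (@load_ge0 _ _ _ m' e m'0) (Hl e))).
rewrite !V_load; apply: sum_close => // e _.
exact: (proj2 (Hd e _ (@load_ge0 _ _ _ m' e m'0) (Hl e))).
Qed.

Section PoAfacts.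
Variable b : R.
Hypothesis b0 : 0 < b.
Hypothesis hb : forall m : T -> R, isProb m ->
  \sum_(p | p.2 \in C p.1) m p = 1 -> b <= Vsoc c m.

Lemma PoA_bounds lam : 0 <= PoA c C lam /\ PoA c C lam <= Ub / b.
Proof.
rewrite /PoA.
set Sw := [set Vsoc c m | m in [set m | wardrop c C lam m]].
set Sa := [set Vsoc c m | m in [set m | admissible C lam m]].
have hSw : forall y, Sw y -> 0 <= y /\ y <= Ub.
  move=> y [m [[Hp _] _] <-]; split; [exact: V_ge0 (proj1 Hp) | exact: V_ub].
have supU : sup Sw <= Ub by apply: sup_le Ub_ge0 _ => y /hSw[].
have sup0' : 0 <= sup Sw.
  by apply: sup_ge0 => [y /hSw[]//|]; exists Ub => y /hSw[].
have hSa : forall y, Sa y -> b <= y by move=> y [m [Hp [_ Hf]] <-]; exact: hb.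
case: (pselect (Sa !=set0)) => [ne|e].
  have ib : b <= inf Sa := lb_le_inf ne hSa.
  have i0 : 0 < inf Sa := lt_le_trans b0 ib.
  split; first by rewrite divr_ge0 // ltW.
  apply: ler_pM => //; first by rewrite invr_ge0 ltW.
  by rewrite lef_pV2 // posrE.
have -> : Sa = set0 by apply/seteqP; split => y Sy //; apply: e; exists y.
by rewrite inf0 invr0 mulr0 lexx divr_ge0 // ?Ub_ge0 // ltW.
Qed.

Lemma PoA_lower lam m a : wardrop c C lam m -> admissible C lam a ->
  Vsoc c m / Vsoc c a <= PoA c C lam.
Proof.
move=> Hm Ha; rewrite /PoA.
set Sw := [set Vsoc c m | m in [set m | wardrop c C lam m]].
set Sa := [set Vsoc c m | m in [set m | admissible C lam m]].
have hSa : forall y, Sa y -> b <= y by move=> y [m' [Hp [_ Hf]] <-]; exact: hb.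
have ne : Sa !=set0 by exists (Vsoc c a), a.
have ib : b <= inf Sa := lb_le_inf ne hSa.
have i0 : 0 < inf Sa := lt_le_trans b0 ib.
have ia : inf Sa <= Vsoc c a.
  apply: ge_inf; last by exists a.
  by exists b => y /hSa.
have ms : Vsoc c m <= sup Sw.
  apply: ub_le_sup; last by exists m.
  by exists Ub => y [m' [[Hp _] _] <-]; exact: V_ub.
apply: ler_pM => //; first by apply: V_ge0; case: Hm => [[[]]].
  by rewrite invr_ge0 (le_trans (ltW i0)).
by rewrite lef_pV2 // posrE (lt_le_trans i0).
Qed.

End PoAfacts.

Lemma main_det (lam0 : W -> R) eps' : 0 < eps' ->
  0 <= PoA_star c C lam0 /\ exists N, forall n, (N <= n)%N -> forall ws : 'I_n -> W, (forall i, lam0 (ws i) != 0) ->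
  forall xs ys, nash c C ws xs -> feasible C ws ys ->
  Vsoc c (emp R ws xs) < (PoA_star c C lam0 + eps') * Vsoc c (emp R ws ys).
Proof.
move=> e0.
have [b b0 hb] := V_lb.
set Rs := PoA_star c C lam0.
have RsP : forall lam, isProb lam -> abs_cont lam lam0 -> PoA c C lam <= Rs.
  move=> lam hl ha; apply: ub_le_sup; last by exists lam.
  by exists (Ub / b) => r [l _ <-]; exact: (proj2 (@PoA_bounds b b0 hb l)).
have Rs0 : 0 <= Rs.
  apply: sup_ge0; first by move=> r [l _ <-]; exact: (proj1 (@PoA_bounds b b0 hb l)).
  by exists (Ub / b) => r [l _ <-]; exact: (proj2 (@PoA_bounds b b0 hb l)).
split; first exact: Rs0.
apply: contrapT => Hn.
pose data n (ws : 'I_n -> W) (xs ys : 'I_n -> {set E}) : bool * T -> R :=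
  fun q => if q.1 then emp R ws xs q.2 else emp R ws ys q.2.
pose Bad (j : nat) (u : bool * T -> R) := exists n, (j < n)%N /\ exists ws xs ys,
  [/\ forall i, lam0 (ws i) != 0, nash c C ws xs, feasible C ws ys,
      (Rs + eps') * Vsoc c (emp R ws ys) <= Vsoc c (emp R ws xs) & u = data n ws xs ys].
have bad : forall j, exists u, Bad j u.
  move=> j; apply: contrapT => Hj; apply: Hn; exists j.+1 => n jn ws hw xs ys hn hf.
  rewrite ltNge; apply/negP => hle; apply: Hj; exists (data n ws xs ys), n; split => //.
  by exists ws, xs, ys; split.
have [u Hu] := choice bad.
have [z Hz] : exists z : bool * T -> R, forall d, 0 < d -> forall K, exists j, (K <= j)%N /\
    forall q, `|u j q - z q| < d.
  apply: cluster_fin => j q.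
  have [n [jn [ws [xs [ys [_ _ _ _ ->]]]]]] := Hu j.
  have n0 : (0 < n)%N by apply: leq_ltn_trans jn.
  by rewrite /data; case: ifP => _; rewrite emp_ge0 emp_le1.
pose m p := z (true, p); pose a p := z (false, p).
have approx : forall d, 0 < d -> forall K, exists n (ws : 'I_n -> W) xs ys, (K < n)%N /\
   [/\ forall i, lam0 (ws i) != 0, nash c C ws xs, feasible C ws ys,
      (Rs + eps') * Vsoc c (emp R ws ys) <= Vsoc c (emp R ws xs) &
     (forall p, `|emp R ws xs p - m p| < d) /\ (forall p, `|emp R ws ys p - a p| < d)].
  move=> d d0 K; have [j [Kj Hj]] := Hz d d0 K.
  have [n [jn [ws [xs [ys [h1 h2 h3 h4 hu]]]]]] := Hu j.
  exists n, ws, xs, ys; split; first exact: leq_ltn_trans jn.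
  split=> //; split=> p; [have := Hj (true, p) | have := Hj (false, p)]; by rewrite hu.
have m0 : forall p, 0 <= m p.
  move=> p; apply: ge0_approx => d d0.
  have [n [ws [xs [ys [_ [_ _ _ _ [h _]]]]]]] := approx d d0 0%N.
  by exists (emp R ws xs p); split; [exact: emp_ge0 | exact: h].
have a0 : forall p, 0 <= a p.
  move=> p; apply: ge0_approx => d d0.
  have [n [ws [xs [ys [_ [_ _ _ _ [_ h]]]]]]] := approx d d0 0%N.
  by exists (emp R ws ys p); split; [exact: emp_ge0 | exact: h].
have sum_lim : forall (P : pred T) (s : R), (forall n (ws : 'I_n -> W) xs ys, (0 < n)%N ->
    nash c C ws xs -> feasible C ws ys ->
    \sum_(p | P p) emp R ws xs p = s /\ \sum_(p | P p) emp R ws ys p = s) ->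
    \sum_(p | P p) m p = s /\ \sum_(p | P p) a p = s.
  move=> P s H; split; apply: (@eq_approx _ _ _ #|{: T}|%:R) => // d d0;
  have [n [ws [xs [ys [n0 [h1 h2 h3 _ [hx hy]]]]]]] := approx d d0 0%N;
  have [Hx Hy] := H n ws xs ys (leq_ltn_trans (leq0n _) n0) h2 h3.
    by rewrite -Hx distrC; apply: sum_close => // p _; exact: hx.
  by rewrite -Hy distrC; apply: sum_close => // p _; exact: hy.
have [mf af] : \sum_(p | p.2 \in C p.1) m p = 1 /\ \sum_(p | p.2 \in C p.1) a p = 1.
  apply: sum_lim => n ws xs ys n0 [hn _] hf.
  by split; [apply: sum_emp_all => //; exact: hn | apply: sum_emp_all => //; exact: hf].
have [m1 a1] : \sum_(p | predT p) m p = 1 /\ \sum_(p | predT p) a p = 1.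
  apply: sum_lim => n ws xs ys n0 _ _.
  by split; apply: sum_emp_all.
have marg : forall w, \sum_x a (w, x) = \sum_x m (w, x).
  move=> w; rewrite -!sum_fst.
  apply: (@eq_approx _ _ _ (#|{: T}|%:R *+ 2)) => [|d d0]; first by rewrite mulrn_wge0.
  have [n [ws [xs [ys [_ [_ _ _ _ [hx hy]]]]]]] := approx d d0 0%N.
  have e1 : \sum_(p | p.1 == w) emp R ws xs p = \sum_(p | p.1 == w) emp R ws ys p.
    by rewrite !sum_emp.
  apply: le_trans (ler_distD (\sum_(p | p.1 == w) emp R ws ys p) _ _) _.
  rewrite mulrnAl mulr2n; apply: lerD.
    by rewrite distrC; apply: sum_close => // p _; exact: hy.
  by rewrite -e1; apply: sum_close => // p _; exact: hx.
have hac : forall w, lam0 w = 0 -> \sum_x m (w, x) = 0.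
  move=> w hw; rewrite -sum_fst; apply: (@eq_approx _ _ _ #|{: T}|%:R) => // d d0.
  have [n [ws [xs [ys [_ [h1 _ _ _ [hx _]]]]]]] := approx d d0 0%N.
  have e1 : \sum_(p | p.1 == w) emp R ws xs p = 0.
    rewrite sum_emp big1 ?mulr0 // => i _.
    have : ws i != w by apply: contraNneq (h1 i) => ->; rewrite hw.
    by move/negbTE => /= ->.
  rewrite -[X in `|_ - X|]e1 distrC; apply: sum_close => // p _; exact: hx.
have T10 : 0 < #|{: T}|%:R + 1 :> R by rewrite ltr_wpDl.
have hw : forall p, 0 < m p -> forall y, y \in C p.1 -> cost c m p.1 p.2 <= cost c m p.1 y.
  move=> p mp y yC.
  apply: (@le_of_eps _ _ _ (#|{: E}|%:R *+ 2)) => [|eta eta0]; first by rewrite mulrn_wge0.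
  have [d d0 Hd] := @cont_pack m m0 eta eta0.
  pose d' := Num.min (m p) (d / (2 * (#|{: T}|%:R + 1))).
  have d'0 : 0 < d' by rewrite lt_min mp divr_gt0 // mulr_gt0.
  have [n [ws [xs [ys [Kn [h1 [hf hn] _ _ [hx _]]]]]]] := approx d' d'0 (Num.trunc (2 / d)).
  have n0 : (0 < n)%N by apply: leq_ltn_trans Kn.
  have np : 0 < n%:R :> R by rewrite ltr0n.
  have hn1 : n%:R^-1 < d / 2.
    have H : 2 / d < n%:R by apply: lt_le_trans (truncnS_gt _) _; rewrite ler_nat.
    rewrite ltr_pdivlMr // mulrC ltr_pdivrMr //.
    by rewrite ltr_pdivrMr // mulrC in H.
  have dm : d' <= m p by rewrite /d' ge_min lexx.
  have ep : 0 < emp R ws xs p.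
    by move: (hx p); rewrite ltr_norml => /andP[h _]; lra.
  have [i hi] := @emp_pos n ws xs p ep.
  have dl : #|{: T}|%:R * d' < d / 2.
    apply: (@le_lt_trans _ _ (#|{: T}|%:R * (d / (2 * (#|{: T}|%:R + 1))))).
      by rewrite ler_wpM2l // /d' ge_min lexx orbT.
    have hq : d / (2 * (#|{: T}|%:R + 1)) * (2 * (#|{: T}|%:R + 1)) = d.
      by rewrite divfK // mulf_neq0 // gt_eqF.
    have q0 : 0 < d / (2 * (#|{: T}|%:R + 1)) by rewrite divr_gt0 // mulr_gt0.
    move: hq q0; set q := d / _; set t := #|{: T}|%:R => hq q0.
    nra.
  have loadx : forall e, `|load (emp R ws xs) e - load m e| < d / 2.
    by move=> e; apply: le_lt_trans (@load_close m (emp R ws xs) d' d'0 hx e) dl.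
  have hd2 : d / 2 < d by lra.
  have [Hx _] := Hd (emp R ws xs) (@emp_ge0 _ _ _ _ ws xs) (fun e => lt_trans (loadx e) hd2).
  have lu : forall e, `|load (emp R ws (upd xs i y)) e - load m e| < d.
    move=> e; apply: le_lt_trans (ler_distD (load (emp R ws xs) e) _ _) _.
    have := @load_upd n ws xs i y e; have := loadx e; lra.
  have [Hup _] := Hd (emp R ws (upd xs i y)) (@emp_ge0 _ _ _ _ ws (upd xs i y)) lu.
  subst p.
  have hni := hn i y yC.
  have [_ A] := @dist_le R _ _ _ (Hx (ws i) (xs i)).
  have [B _] := @dist_le R _ _ _ (Hup (ws i) y).
  rewrite /= in A B hni *.
  rewrite mulrnAl mulr2n; lra.
have hV : (Rs + eps') * Vsoc c a <= Vsoc c m.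
  have r0 : 0 <= Rs + eps' by lra.
  apply: (@le_of_eps _ _ _ ((Rs + eps') * #|{: E}|%:R + #|{: E}|%:R)) => [|eta eta0].
    by rewrite addr_ge0 ?mulr_ge0.
  have [d1 d10 Hd1] := @cont_pack m m0 eta eta0.
  have [d2 d20 Hd2] := @cont_pack a a0 eta eta0.
  pose d' := Num.min d1 d2 / (#|{: T}|%:R + 1).
  have dmin : 0 < Num.min d1 d2 by rewrite lt_min d10 d20.
  have d'0 : 0 < d' by rewrite divr_gt0.
  have dl : #|{: T}|%:R * d' < Num.min d1 d2.
    rewrite /d' mulrA ltr_pdivrMr //.
    move: dmin; set mn := Num.min d1 d2; set t := #|{: T}|%:R => dmin; nra.
  have md1 : Num.min d1 d2 <= d1 by rewrite ge_min lexx.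
  have md2 : Num.min d1 d2 <= d2 by rewrite ge_min lexx orbT.
  have [n [ws [xs [ys [_ [_ _ _ h4 [hx hy]]]]]]] := approx d' d'0 0%N.
  have [_ Vx] := Hd1 (emp R ws xs) (@emp_ge0 _ _ _ _ ws xs)
    (fun e => lt_le_trans (le_lt_trans (@load_close m (emp R ws xs) d' d'0 hx e) dl) md1).
  have [_ Vy] := Hd2 (emp R ws ys) (@emp_ge0 _ _ _ _ ws ys)
    (fun e => lt_le_trans (le_lt_trans (@load_close a (emp R ws ys) d' d'0 hy e) dl) md2).
  have [A _] := @dist_le R _ _ _ Vx.
  have [_ B] := @dist_le R _ _ _ Vy.
  have B' := ler_wpM2l r0 B.
  rewrite mulrDr in B'.
  have -> : ((Rs + eps') * #|{: E}|%:R + #|{: E}|%:R) * eta =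
    (Rs + eps') * (#|{: E}|%:R * eta) + #|{: E}|%:R * eta by ring.
  lra.
pose lam w := \sum_x m (w, x).
have hlam : isProb lam.
  split; first by move=> w; apply: sumr_ge0 => x _.
  by rewrite /lam pair_bigA /= -m1; apply: eq_bigr => -[w x].
have wm : wardrop c C lam m.
  split; last exact: hw.
  split; first by split; [exact: m0 | exact: m1].
  by split.
have wa : admissible C lam a.
  split; first by split; [exact: a0 | exact: a1].
  by split.
have Va : b <= Vsoc c a by apply: hb; [split; [exact: a0 | exact: a1] | exact: af].
have Va0 : 0 < Vsoc c a := lt_le_trans b0 Va.
have := @PoA_lower b b0 hb lam m a wm wa.
have := RsP lam hlam hac.
rewrite -(ler_pdivlMr _ _ Va0) in hV.
lra.
Qed.

End Game.

Theorem corollary2p12 (R : realType) (W E : finType)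
  (C : W -> {set {set E}}) (c : E -> R -> R) (lam0 : W -> R)
  (hC_nonempty : forall w, C w != finset.set0)
  (hC_X : forall w, finset.set0 \notin C w)
  (hc_cont : forall e, {within [set t : R | 0 <= t], continuous (c e)})
  (hc_nneg : forall e t, 0 <= t -> 0 <= c e t)
  (hc_incr : forall e s t, 0 <= s -> s <= t -> c e s <= c e t)
  (hpos : forall w x, x \in C w -> exists e, e \in x /\ forall t, 0 < t -> 0 < c e t)
  (hlam0 : isProb lam0) :
  forall eps cc : R, 0 < eps -> 0 < cc ->
  exists N : nat, forall n : nat, (N <= n)%N ->
    prob_PoA_ge c C lam0 n (PoA_star c C lam0 + eps) <= expR (- (cc * n%:R)).
Proof.
move=> eps cc e0 cc0.
have e20 : 0 < eps / 2 by rewrite divr_gt0.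
have [Rs0 [N HN]] := @main_det R W E C c hc_cont hc_nneg hc_incr hpos lam0 (eps / 2) e20.
have [b b0 hb] := @V_lb R W E C c hc_nneg hc_incr hpos.
exists N.+1 => n Nn.
have n0 : (0 < n)%N by apply: leq_ltn_trans Nn.
rewrite /prob_PoA_ge big1 ?expR_ge0 // => ws _.
have [->|hp] := eqVneq (\prod_(i < n) lam0 (ws i)) 0; first by rewrite mul0r.
have hw : forall i, lam0 (ws i) != 0.
  by move=> i; apply: contraNneq hp => h; rewrite (bigD1 i) //= h mul0r.
suff H : PoA_n c C (fun i => ws i) < PoA_star c C lam0 + eps.
  by rewrite leNgt H /= mulr0.
set Rs := PoA_star c C lam0.
set ws' := fun i => ws i.
rewrite /PoA_n.
set SN := [set Vsoc c (emp R ws' xs) | xs in [set xs | nash c C ws' xs]].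
set SF := [set Vsoc c (emp R ws' xs) | xs in [set xs | feasible C ws' xs]].
have [ys0 hys0] : exists ys : 'I_n -> {set E}, feasible C ws' ys.
  exists (fun i => odflt finset.set0 [pick x in C (ws' i)]) => i /=.
  case: pickP => [x //|/= H0].
  by have /set0Pn[x hx] := hC_nonempty (ws' i); move: (H0 x); rewrite hx.
have SFne : SF !=set0 by exists (Vsoc c (emp R ws' ys0)), ys0.
have SFlb : forall y, SF y -> b <= y.
  move=> y [ys hys <-]; apply: hb; first exact: emp_isProb.
  by apply: sum_emp_all.
have iF : b <= inf SF := lb_le_inf SFne SFlb.
have iF0 : 0 < inf SF := lt_le_trans b0 iF.
have r0 : 0 < Rs + eps / 2 by rewrite ltr_wpDl.
have key : forall xs, nash c C ws' xs -> Vsoc c (emp R ws' xs) <= (Rs + eps / 2) * inf SF.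
  move=> xs hn; rewrite mulrC -ler_pdivrMr //.
  apply: lb_le_inf SFne _ => y [ys hys <-].
  rewrite ler_pdivrMr // mulrC; apply: ltW.
  exact: (HN n (ltnW Nn) ws' hw xs ys hn hys).
have sN : sup SN <= (Rs + eps / 2) * inf SF.
  apply: sup_le; first by rewrite mulr_ge0 // ltW.
  by move=> y [xs hn <-]; exact: key.
rewrite ltr_pdivrMr //.
apply: le_lt_trans sN _.
rewrite ltr_pM2r //; lra.
Qed.
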